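(* Let $K$ be an infinite field containing $\mathbb{F}_q$, let $B\in\mathrm{GL}_n(K)$, and let $N\in\mathrm{GL}_n(K)$ be such that $N^{-1}BN^{(q)}=\Delta$, where $\Delta$ is the matrix with $1$'s on the subdiagonal, last column $(a_0,a_1,\dots,a_{n-1})^T$ and all other entries $0$. Then the splitting field over $K$ of the system $BX^{(q)}=X$ coincides with the splitting field over $K$ of the additive polynomial $f(Y)=Y^{q^n}-a_0Y-a_1Y^q-\cdots-a_{n-1}Y^{q^{n-1}}$.
   Context: $X^{(q)}$, $N^{(q)}$ denote entrywise $q$-th powers. The splitting field over $K$ of $BX^{(q)}=X$ is the subfield of $K_{\mathrm{sep}}$ generated over $K$ by the coordinates of all its solutions in $K_{\mathrm{sep}}^n$. *)

(* Defs.v *)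
From HB Require Import structures.
From mathcomp Require Import all_boot all_order all_algebra all_field.
Set Implicit Arguments. Unset Strict Implicit. Unset Printing Implicit Defensive.
Import GRing.Theory.
Local Open Scope ring_scope.

Definition frobmx (R : nzRingType) (q m n : nat) (M : 'M[R]_(m, n)) : 'M[R]_(m, n) :=
  map_mx (fun x => x ^+ q) M.

Definition Delta (R : nzRingType) (n : nat) (a : 'I_n -> R) : 'M[R]_n :=
  \matrix_(i < n, j < n)
    (if j.+1 == n then a i else if i == j.+1 :> nat then 1 else 0).

Definition addpoly (R : nzRingType) (q n : nat) (a : 'I_n -> R) : {poly R} :=
  'X^(q ^ n) - \sum_(i < n) a i *: 'X^(q ^ i).

(* Subfield of L generated over iota(K) by the set S: the intersection of all
   subfields of L containing iota(K) and S. *)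
Definition subfield_pred (L : fieldType) (P : pred L) : Prop :=
  [/\ P 1, (forall x y, P x -> P y -> P (x - y)),
      (forall x y, P x -> P y -> P (x * y)) & (forall x, P x -> P x^-1)].

Definition gen_field (K L : fieldType) (iota : {rmorphism K -> L}) (S : L -> Prop)
  (z : L) : Prop :=
  forall P : pred L, subfield_pred P -> (forall k, P (iota k)) ->
    (forall s, S s -> P s) -> P z.

Definition system_coords (K L : fieldType) (iota : {rmorphism K -> L}) (q n : nat)
  (B : 'M[K]_n) (z : L) : Prop :=
  exists (X : 'cV[L]_n) (i : 'I_n),
    map_mx iota B *m frobmx q X = X /\ z = X i 0.

Definition poly_roots (K L : fieldType) (iota : {rmorphism K -> L}) (p : {poly K})
  (z : L) : Prop := root (map_poly iota p) z.

(* Main.v *)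
Require Import Defs.
From HB Require Import structures.
From mathcomp Require Import all_boot all_order all_algebra all_field.
From mathcomp Require abelian pgroup.
Set Implicit Arguments. Unset Strict Implicit. Unset Printing Implicit Defensive.
Import GRing.Theory.
Local Open Scope ring_scope.

Section Closure.
Variables (L : fieldType) (P : pred L) (sP : subfield_pred P).

Lemma sP1 : P 1. Proof. by case: sP. Qed.
Lemma sPB x y : P x -> P y -> P (x - y). Proof. by case: sP => _ h _ _; apply: h. Qed.
Lemma sPM x y : P x -> P y -> P (x * y). Proof. by case: sP => _ _ h _; apply: h. Qed.
Lemma sPV x : P x -> P x^-1. Proof. by case: sP => _ _ _ h; apply: h. Qed.
Lemma sP0 : P 0. Proof. by rewrite -(subrr 1); apply: sPB; apply: sP1. Qed.
Lemma sPN x : P x -> P (- x). Proof. by move=> h; rewrite -sub0r; apply: sPB => //; apply: sP0. Qed.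
Lemma sPD x y : P x -> P y -> P (x + y).
Proof. by move=> hx hy; rewrite -[y]opprK; apply: sPB => //; apply: sPN. Qed.
Lemma sPX x k : P x -> P (x ^+ k).
Proof. by move=> hx; elim: k => [|k IH]; rewrite ?expr0 ?exprS ?sP1 ?sPM. Qed.
Lemma sPsum I (r : seq I) (Q : pred I) (F : I -> L) :
  (forall i, Q i -> P (F i)) -> P (\sum_(i <- r | Q i) F i).
Proof. by move=> h; elim/big_ind: _ => //; [exact: sP0 | exact: sPD]. Qed.
Lemma sPprod I (r : seq I) (Q : pred I) (F : I -> L) :
  (forall i, Q i -> P (F i)) -> P (\prod_(i <- r | Q i) F i).
Proof. by move=> h; elim/big_ind: _ => //; [exact: sP1 | exact: sPM]. Qed.

Definition mxin m n (A : 'M[L]_(m, n)) := forall i j, P (A i j).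

Lemma mxin_mul m n k (A : 'M[L]_(m, n)) (B : 'M[L]_(n, k)) :
  mxin A -> mxin B -> mxin (A *m B).
Proof. by move=> hA hB i j; rewrite mxE; apply: sPsum => l _; apply: sPM. Qed.

Lemma det_in n (A : 'M[L]_n) : mxin A -> P (\det A).
Proof.
move=> hA; rewrite /determinant; apply: sPsum => s _; apply: sPM.
  by apply: sPX; apply: sPN; apply: sP1.
by apply: sPprod => i _; apply: hA.
Qed.

Lemma invmx_in n (A : 'M[L]_n) : mxin A -> mxin (invmx A).
Proof.
move=> hA; rewrite /invmx; case: (A \in unitmx) => // i j.
rewrite !mxE; apply: sPM; first by apply: sPV; apply: det_in.
rewrite /cofactor; apply: sPM; first by apply: sPX; apply: sPN; apply: sP1.
by apply: det_in => k l; rewrite !mxE.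
Qed.

End Closure.

Lemma gen_trans (K L : fieldType) (iota : {rmorphism K -> L}) (S T : L -> Prop) :
  (forall s, S s -> gen_field iota T s) ->
  forall z, gen_field iota S z -> gen_field iota T z.
Proof.
move=> H z Hz P sP Pk PT; apply: Hz => // s Ss; exact: H s Ss P sP Pk PT.
Qed.

Section Frob.
Variables (R : fieldType) (p : nat) (chR : p \in [pchar R]).

Lemma frobmx_iter k m n (A : 'M[R]_(m, n)) :
  frobmx (p ^ k) A = iter k (map_mx (pFrobenius_aut chR)) A.
Proof.
elim: k => [|k IH] /=; first by apply/matrixP => i j; rewrite !mxE expn0 expr1.
by rewrite -IH; apply/matrixP => i j; rewrite !mxE pFrobenius_autE -exprM expnSr.
Qed.

Lemma frobmx_mul k m n l (A : 'M[R]_(m, n)) (B : 'M[R]_(n, l)) :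
  frobmx (p ^ k) (A *m B) = frobmx (p ^ k) A *m frobmx (p ^ k) B.
Proof. by rewrite !frobmx_iter; elim: k => //= k ->; rewrite map_mxM. Qed.

Lemma frobmx_unit k n (A : 'M[R]_n) :
  (frobmx (p ^ k) A \in unitmx) = (A \in unitmx).
Proof. by rewrite frobmx_iter; elim: k => //= k <-; rewrite map_unitmx. Qed.

Lemma frobmx1 k n : frobmx (p ^ k) (1%:M : 'M[R]_n) = 1%:M.
Proof. by rewrite frobmx_iter; elim: k => //= k ->; rewrite map_mx1. Qed.

End Frob.

Lemma frobmx_col (R : nzRingType) q m n (j : 'I_n) (X : 'M[R]_(m, n)) :
  frobmx q (col j X) = col j (frobmx q X).
Proof. by apply/matrixP => i k; rewrite !mxE. Qed.

Lemma map_frobmx (K L : fieldType) (iota : {rmorphism K -> L}) q m n (A : 'M[K]_(m, n)) :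
  map_mx iota (frobmx q A) = frobmx q (map_mx iota A).
Proof. by apply/matrixP => i j; rewrite !mxE rmorphXn. Qed.

Lemma map_Delta (K L : fieldType) (iota : {rmorphism K -> L}) n (a : 'I_n -> K) :
  map_mx iota (Delta a) = Delta (fun i => iota (a i)).
Proof.
apply/matrixP => i j; rewrite !mxE.
by case: ifP => // _; case: ifP => _; rewrite ?rmorph1 ?rmorph0.
Qed.

Definition moore (L : fieldType) q m n (w : 'I_m -> L) : 'M[L]_(m, n) :=
  \matrix_(i, j) w i ^+ (q ^ j).

Lemma moore_frob (L : fieldType) q n m (a' : 'I_n -> L) (w : 'I_m -> L)
  (hw : forall i, w i ^+ (q ^ n) = \sum_l a' l * w i ^+ (q ^ l)) :
  moore q n w *m Delta a' = frobmx q (moore q n w).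
Proof.
apply/matrixP => i j; rewrite !mxE -exprM -expnSr.
under eq_bigr => l _ do rewrite !mxE.
case Hj: (j.+1 == n)%N.
  by rewrite (eqP Hj) hw; apply: eq_bigr => l _; rewrite mulrC.
have hj : (j.+1 < n)%N by rewrite ltn_neqAle Hj ltn_ord.
rewrite (bigD1 (Ordinal hj)) //= eqxx mulr1 big1 ?addr0 // => l hl.
rewrite ifF ?mulr0 //; apply/negbTE; apply: contra hl => /eqP e.
by apply/eqP/val_inj.
Qed.

Definition addp (L : fieldType) q n (c : 'I_n -> L) : {poly L} :=
  \sum_i c i *: 'X^(q ^ i).

Section Addp.
Variables (L : fieldType) (q n : nat) (c : 'I_n -> L).

Lemma coef_addp j : (addp q c)`_j = \sum_i c i * (j == (q ^ i)%N)%:R.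
Proof. by rewrite coef_sum; apply: eq_bigr => i _; rewrite coefZ coefXn. Qed.

Lemma coef_addp_q (hq : (1 < q)%N) (k : 'I_n) : (addp q c)`_(q ^ k)%N = c k.
Proof.
rewrite coef_addp (bigD1 k) //= eqxx mulr1 big1 ?addr0 // => i hi.
rewrite eqn_exp2l //.
have -> : (k == i :> nat) = false.
  by apply/negbTE; apply: contra hi => /eqP e; apply/eqP/val_inj.
by rewrite mulr0.
Qed.

Lemma size_addp (hq : (1 < q)%N) : (size (addp q c) <= (q ^ n.-1)%N.+1)%N.
Proof.
apply/leq_sizeP => j hj; rewrite coef_addp big1 // => i _.
suff -> : (j == (q ^ i)%N) = false by rewrite mulr0.
apply/negbTE; rewrite neq_ltn; apply/orP; right.
apply: leq_ltn_trans hj; apply: leq_pexp2l; first exact: ltnW.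
by rewrite -ltnS (ltn_predK (ltn_ord i)).
Qed.

Lemma horner_addp x : (addp q c).[x] = \sum_i c i * x ^+ (q ^ i).
Proof. by rewrite horner_sum; apply: eq_bigr => i _; rewrite hornerZ hornerXn. Qed.

End Addp.

Lemma map_addpoly (K L : fieldType) (iota : {rmorphism K -> L}) q n (a : 'I_n -> K) :
  map_poly iota (addpoly q a) = 'X^(q ^ n) - addp q (fun i => iota (a i)).
Proof.
rewrite /addpoly raddfB /= map_polyXn raddf_sum /=; congr (_ - _).
by apply: eq_bigr => i _; rewrite map_polyZ map_polyXn.
Qed.

Lemma moore_full (L : fieldType) q n (hq : (1 < q)%N) (hn : (0 < n)%N)
  (s : seq L) (us : uniq s) (hs : size s = (q ^ n)%N) :
  row_full (\matrix_(i < size s, j < n) s`_i ^+ (q ^ j)).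
Proof.
set A := \matrix_(i < size s, j < n) _.
apply: contraT => nf.
have rA : (\rank A < n)%N by rewrite ltn_neqAle nf rank_leq_col.
set Kr := kermx A^T.
have : \rank Kr != 0%N by rewrite mxrank_ker mxrank_tr subn_eq0 -ltnNge.
rewrite mxrank_eq0 => KrN0.
have [i0 hi0] : exists i, row i Kr != 0.
  apply/existsP; apply: contraR KrN0 => /existsPn H; apply/eqP/row_matrixP => i.
  by move: (H i); rewrite negbK row0 => /eqP.
set u := row i0 Kr.
have hu : u *m A^T = 0 by rewrite /u -row_mul mulmx_ker row0.
have [j0 hj0] : exists j, u 0 j != 0.
  apply/existsP; apply: contraR hi0 => /existsPn H; apply/eqP/rowP => j.
  by move: (H j); rewrite negbK [RHS]mxE => /eqP.
set h := addp q (fun j => u 0 j).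
have hN0 : h != 0.
  by apply: contra hj0 => /eqP h0; rewrite -(coef_addp_q _ hq) -/h h0 coef0.
have hroots : all (root h) s.
  apply/allP => x /(nthP 0) [l hl <-]; rewrite /root horner_addp.
  have := congr1 (fun M : 'M[L]_(1, size s) => M 0 (Ordinal hl)) hu; rewrite !mxE => H0.
  by apply/eqP; rewrite -[X in _ = X]H0; apply: eq_bigr => j _; rewrite !mxE.
have := max_poly_roots hN0 hroots us; rewrite hs => H.
have := leq_trans H (size_addp _ hq).
rewrite ltnS leqNgt ltn_exp2l //; case: n hn {hs A nf rA Kr KrN0 u hu j0 hj0 i0 hi0 hN0 h hroots H} => // n _; by rewrite /= ltnSn.
Qed.

Lemma roots_f (L : closedFieldType) q n' (c : 'I_n'.+1 -> L) (hq : (1 < q)%N)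
  (hq0 : (q%:R : L) = 0) (hc : c ord0 != 0) :
  exists s : seq L, [/\ uniq s, size s = (q ^ n'.+1)%N &
     all (root ('X^(q ^ n'.+1) - addp q c)) s].
Proof.
set f := 'X^(q ^ n'.+1) - addp q c.
have hsize : size f = (q ^ n'.+1).+1.
  rewrite size_polyDl size_polyXn // size_polyN; apply: leq_ltn_trans (size_addp c hq) _.
  by rewrite ltnS ltn_exp2l.
have hz : forall (x : {poly L}) k, (0 < k)%N -> x *+ (q ^ k) = 0.
  move=> x [|k] // _; rewrite expnS mulrnA.
  have -> : x *+ q = 0 by rewrite -mulr_natr -polyC_natr hq0 mulr0.
  by rewrite mul0rn.
have hder : f^`() = - (c ord0)%:P.
  rewrite /f derivB derivXn hz // sub0r /addp raddf_sum /= big_ord_recl big1 ?addr0 /=.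
    by rewrite derivZ expn0 derivX alg_polyC.
  by move=> i _; rewrite derivZ derivXn hz // scaler0.
have sep : separable_poly f.
  rewrite unlock hder -polyCN -alg_polyC coprimepZr ?oppr_eq0 //.
  exact: coprimep1.
have [r hr] := closed_field_poly_normal f.
have fN0 : f != 0 by rewrite -size_poly_eq0 hsize.
have lcN0 : lead_coef f != 0 by rewrite lead_coef_eq0.
exists r; split.
- by rewrite -separable_prod_XsubC -(eqp_separable (eqp_scale _ lcN0)) -hr.
- by move: hsize; rewrite hr size_scale // size_prod_XsubC => -[].
- by apply/allP => x xr; rewrite hr rootZ // root_prod_XsubC.
Qed.

Lemma fix_in (Fq : finFieldType) (K L : fieldType) (emb : {rmorphism Fq -> K})
  (iota : {rmorphism K -> L}) (c : L) :
  c ^+ #|Fq| = c -> exists x, c = iota (emb x).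
Proof.
move=> hc.
have H := congr1 (map_poly iota) (congr1 (map_poly emb) (finField_genPoly Fq)).
rewrite !raddfB /= !map_polyXn !map_polyX !rmorph_prod /= in H.
have : root (\prod_(x : Fq) map_poly iota (map_poly emb ('X - x%:P))) c.
  by rewrite -H rootE !hornerE hc subrr.
under eq_bigr => x _ do rewrite !map_polyXsubC.
rewrite -big_enum /= -(big_map (fun x => iota (emb x)) xpredT (fun y => 'X - y%:P)).
by rewrite root_prod_XsubC => /mapP [x _ ->]; exists x.
Qed.

Theorem corollary4p5
  (K : fieldType)
  (K_infinite : forall s : seq K, exists x : K, x \notin s)
  (q : nat) (Fq : finFieldType) (card_Fq : #|Fq| = q)
  (emb : {rmorphism Fq -> K})
  (n : nat) (n_gt0 : (0 < n)%N)
  (B N : 'M[K]_n) (B_unit : B \in unitmx) (N_unit : N \in unitmx)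
  (a : 'I_n -> K)
  (hN : invmx N *m B *m frobmx q N = Delta a)
  (L : closedFieldType) (iota : {rmorphism K -> L}) :
  forall z : L,
    gen_field iota (system_coords iota q B) z <->
    gen_field iota (poly_roots iota (addpoly q a)) z.
Proof.
have [p pr_p chFq] := finPcharP Fq.
have pn : p.-nat q.
  by rewrite -card_Fq -cardsT; exact: (abelian.abelem_pgroup (abelian.fin_ring_pchar_abelem chFq)).
have [k hk] := p_natP pn.
have hq1 : (1 < q)%N by rewrite -card_Fq finNzRing_gt1.
have chK : p \in [pchar K] := rmorph_pchar emb chFq.
have chL : p \in [pchar L] := rmorph_pchar iota chK.
have hq0 : (q%:R : L) = 0.
  move: hq1; rewrite hk natrX (GRing.pcharf0 chL); case: k {hk} => // k _.
  by rewrite expr0n.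
have fmul : forall m n0 l (A : 'M[L]_(m, n0)) (Bm : 'M_(n0, l)),
    frobmx q (A *m Bm) = frobmx q A *m frobmx q Bm.
  by move=> *; rewrite hk; exact: (frobmx_mul chL).
have funitK : forall n0 (A : 'M[K]_n0), (frobmx q A \in unitmx) = (A \in unitmx).
  by move=> *; rewrite hk; exact: (frobmx_unit chK).
have f1 : forall n0, frobmx q (1%:M : 'M[L]_n0) = 1%:M.
  by move=> *; rewrite hk; exact: (frobmx1 chL).
case: n n_gt0 B N B_unit N_unit a hN => // n' _ B N B_unit N_unit a hN.
have a0 : a ord0 != 0.
  have Du : Delta a \in unitmx by rewrite -hN !unitmx_mul unitmx_inv B_unit N_unit funitK N_unit.
  apply/negP => /eqP a0.
  have := congr1 (fun M : 'M[K]_n'.+1 => M ord0 ord0) (mulmxV Du).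
  rewrite /= [RHS]mxE eqxx /= mxE big1; first by move/eqP; rewrite eq_sym oner_eq0.
  move=> j _.
  rewrite /Delta mxE; case: ifP => _; first by rewrite a0 mul0r.
  by rewrite mul0r.
set a' := fun i => iota (a i).
set Bl := map_mx iota B; set Nl := map_mx iota N; set Dl := Delta a'.
have hNl : invmx Nl *m Bl *m frobmx q Nl = Dl.
  by rewrite /Bl /Nl /Dl -map_invmx -map_frobmx -!map_mxM hN map_Delta.
have Nl_unit : Nl \in unitmx by rewrite map_unitmx.
have hBN : Bl *m frobmx q Nl = Nl *m Dl.
  by rewrite -hNl !mulmxA mulmxV // mul1mx.
have rootE' : forall z, poly_roots iota (addpoly q a) z <->
    z ^+ (q ^ n'.+1) = \sum_l a' l * z ^+ (q ^ l).
  move=> z; rewrite /poly_roots map_addpoly rootE hornerD hornerN hornerXn horner_addp subr_eq0.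
  by split => /eqP.
have a'0 : a' ord0 != 0 by rewrite fmorph_eq0.
have [s [us hs hr]] := roots_f hq1 hq0 a'0.
have fA := moore_full hq1 (ltn0Sn n') us hs.
set f := fullrankfun fA.
set w := fun i => s`_(f i).
set M := moore q n'.+1 w.
have M_unit : M \in unitmx.
  have -> : M = rowsub f (\matrix_(i < size s, j < n'.+1) s`_i ^+ (q ^ j)).
    by apply/matrixP => i j; rewrite !mxE.
  exact: fullrowsub_unit.
have hw : forall i, poly_roots iota (addpoly q a) (w i).
  move=> i; rewrite /poly_roots map_addpoly.
  exact: (allP hr) _ (mem_nth 0 (ltn_ord (f i))).
have key : forall m l (w' : 'I_m -> L), (forall i, poly_roots iota (addpoly q a) (w' i)) ->
    forall Z : 'M[L]_(n'.+1, l),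
    frobmx q (moore q n'.+1 w' *m Z) = moore q n'.+1 w' *m (Dl *m frobmx q Z).
  move=> m l w' hw' Z; rewrite fmul -(@moore_frob _ q n'.+1 m a') ?mulmxA // => i.
  exact/rootE'.
have fixP : forall P : pred L, (forall k, P (iota k)) ->
    forall m l (C : 'M[L]_(m, l)), frobmx q C = C -> mxin P C.
  move=> P Pk m l C hC i j; have := congr1 (fun M : 'M[L]_(m, l) => M i j) hC; rewrite mxE.
  by rewrite -card_Fq => /(fix_in emb iota) [x ->].
have mapP' : forall P : pred L, (forall k, P (iota k)) ->
    forall m l (C : 'M[K]_(m, l)), mxin P (map_mx iota C).
  by move=> P Pk m l C i j; rewrite mxE.
have mooreP : forall P : pred L, subfield_pred P ->
    forall m (w' : 'I_m -> L), (forall i, P (w' i)) -> mxin P (moore q n'.+1 w').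
  by move=> P sP m w' hw' i j; rewrite mxE; apply: sPX.
move=> z; split; apply: gen_trans.
- move=> s0 [X [i [hX ->]]] P sP Pk PR.
  set Y := invmx Nl *m X.
  have hY : Dl *m frobmx q Y = Y.
    by rewrite -hNl -!mulmxA -fmul mulKVmx // hX.
  set c := M *m Y.
  have hc : frobmx q c = c by rewrite /c key // hY.
  have -> : X = Nl *m (invmx M *m c) by rewrite /c mulKmx // mulKVmx.
  apply: (mxin_mul sP); first exact: mapP'.
  apply: (mxin_mul sP); last exact: fixP.
  by apply: invmx_in => //; apply: mooreP => // i0; apply: PR.
- move=> s0 hs0 P sP Pk PS.
  set Mat := invmx M.
  have hMat : Dl *m frobmx q Mat = Mat.
    have : M *m (Dl *m frobmx q Mat) = M *m Mat by rewrite -key // mulmxV // f1.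
    by move/(congr1 (mulmx (invmx M))); rewrite !mulKmx.
  set Xm := Nl *m Mat.
  have hXm : Bl *m frobmx q Xm = Xm by rewrite fmul mulmxA hBN -mulmxA hMat.
  have XmP : mxin P Xm.
    move=> i j; apply: PS; exists (col j Xm), i; split.
      by rewrite frobmx_col !colE mulmxA hXm.
    by rewrite /col [RHS]mxE.
  have MatP : mxin P Mat.
    have -> : Mat = invmx Nl *m Xm by rewrite mulKmx.
    apply: (mxin_mul sP) => //; rewrite -map_invmx; exact: mapP'.
  have MP : mxin P M by rewrite -[M]invmxK; apply: invmx_in.
  set r := moore q n'.+1 (fun _ : 'I_1 => s0).
  set d := r *m Mat.
  have hd : frobmx q d = d by rewrite /d key // hMat.
  have -> : s0 = (d *m M) 0 ord0.
    by rewrite /d mulmxKV // /r mxE expn0 expr1.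
  by apply: (mxin_mul sP) => //; apply: fixP.
Qed.
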